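(* Let $n\ge 2$ be even and $k\ge 3$. Let $Q(n,k)$ be the configuration with exactly $2k-1$ levels in which: level $2k-1$ (top) consists of $\frac n2$ blocks in consecutive slots; level $2k-2$ is full ($n$ blocks); and each level $i$ with $1\le i\le 2k-3$ consists of $\frac n2$ blocks in pairwise non-adjacent slots. Then the genus of (the boundary surface of) $Q(n,k)$ is $$ g(n,k)=\frac{n(n-2)(k-2)}{2}. $$
   Context: Blocks are boxes of length $n$, width $1$, height $1$. Level $i$ occupies heights $[i-1,i]$ and has $n$ slots $j=1,\dots,n$; a block in slot $j$ of an odd level $i$ is $[0,n]\times[j-1,j]\times[i-1,i]$, and a block in slot $j$ of an even level $i$ is $[j-1,j]\times[0,n]\times[i-1,i]$. Slots $j,j'$ are adjacent if $|j-j'|=1$. The genus of a configuration is the genus of the boundary surface of the union of its blocks (a connected closed polyhedral surface). The configuration uses $nk$ blocks in total. *)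

(* Defs.v *)
From HB Require Import structures.
From mathcomp Require Import all_boot all_order all_algebra.
Set Implicit Arguments. Unset Strict Implicit. Unset Printing Implicit Defensive.
Import Order.TTheory GRing.Theory Num.Theory.

(* A configuration of blocks: [c i j] is true iff slot j of level i holds a
   block (levels and slots are 1-based).  A configuration is given together
   with n (block length / number of slots) and H (number of levels); only
   levels 1..H and slots 1..n are used.

   The union of blocks is decomposed into unit cubes [x,x+1]x[y,y+1]x[z,z+1]
   (x y z integers, the "lower corner" p=(x,y,z)).  Cube (x,y,z) belongs to a
   block of level i=z+1, slot j=y+1 if i is odd, slot j=x+1 if i is even. *)

Definition config := nat -> nat -> bool.
Definition pt := (int * int * int)%type.

Definition padd (p q : pt) : pt := (p.1.1 + q.1.1, p.1.2 + q.1.2, p.2 + q.2)%R.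
Definition psub (p q : pt) : pt := (p.1.1 - q.1.1, p.1.2 - q.1.2, p.2 - q.2)%R.
Definition pzero : pt := (0, 0, 0)%R.
Definition unitv (d : nat) : pt :=
  match d with 0 => (1, 0, 0)%R | 1 => (0, 1, 0)%R | _ => (0, 0, 1)%R end.
Definition bscale (b : bool) (p : pt) : pt := if b then p else pzero.

Definition cube_filled (n H : nat) (c : config) (p : pt) : bool :=
  let: (x, y, z) := p in
  [&& (0 <= x)%R, (x < (Posz n))%R, (0 <= y)%R, (y < (Posz n))%R, (0 <= z)%R,
      (z < (Posz H))%R &
      (if odd (absz z).+1 then c (absz z).+1 (absz y).+1
       else c (absz z).+1 (absz x).+1)].

(* The boundary surface of the union, as a subcomplex of the unit cubical
   lattice.  The lattice square (p,d) is the unit square with lower corner p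
   normal to direction d; it separates cube p from cube p - e_d and lies on the
   boundary iff exactly one of those two cubes is filled. *)
Definition bface n H c (p : pt) (d : nat) : bool :=
  cube_filled n H c p != cube_filled n H c (psub p (unitv d)).

Definition odir1 (d : nat) : nat := (d.+1 %% 3)%N.
Definition odir2 (d : nat) : nat := (d.+2 %% 3)%N.

(* Lattice edge (q,d') = segment from q to q + e_d'.  It is an edge of the
   lattice square (p,d) iff d <> d' and q = p or q = p + e_d'' (d'' the third
   direction, = 3 - d - d'). *)
Definition bedge n H c (q : pt) (d' : nat) : bool :=
  [exists d : 'I_3, (val d != d') &&
     (bface n H c q d || bface n H c (psub q (unitv (3 - d - d'))) d)].

(* Boundary vertex = corner of some boundary square. The corners of (p,d)
   are p + s e_{d1} + t e_{d2}, s,t in {0,1}. *)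
Definition bvert n H c (q : pt) : bool :=
  [exists d : 'I_3, [exists s : bool, [exists t : bool,
     bface n H c (psub (psub q (bscale s (unitv (odir1 d))))
                       (bscale t (unitv (odir2 d)))) d]]].

(* All boundary cells have lower corner in [0,n]x[0,n]x[0,H]. *)
Definition box (n H : nat) := ('I_n.+1 * 'I_n.+1 * 'I_H.+1)%type.
Definition ptOf n H (b : box n H) : pt :=
  ((Posz (nat_of_ord b.1.1)), (Posz (nat_of_ord b.1.2)), (Posz (nat_of_ord b.2))).

Definition nVerts n H c : nat := #|[set b : box n H | bvert n H c (ptOf b)]|.
Definition nEdges n H c : nat :=
  #|[set x : box n H * 'I_3 | bedge n H c (ptOf x.1) x.2]|.
Definition nFaces n H c : nat :=
  #|[set x : box n H * 'I_3 | bface n H c (ptOf x.1) x.2]|.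

Definition euler_char n H c : int :=
  ((Posz (nVerts n H c)) - (Posz (nEdges n H c)) + (Posz (nFaces n H c)))%R.

(* Genus of the (connected closed orientable) boundary surface: chi = 2 - 2g. *)
Definition genus n H c : int := ((2 - euler_char n H c) %/ 2)%Z.

(* Main.v *)
Require Import Defs.
From HB Require Import structures.
From mathcomp Require Import all_boot all_order all_algebra.
From mathcomp Require Import zify ring lra.
Set Implicit Arguments. Unset Strict Implicit. Unset Printing Implicit Defensive.
Import Order.TTheory GRing.Theory Num.Theory.


Definition bf (g : pt -> bool) p d := g p != g (psub p (unitv d)).
Definition be (g : pt -> bool) (q : pt) (d' : nat) : bool :=
  [exists d : 'I_3, (val d != d') &&
     (bf g q d || bf g (psub q (unitv (3 - d - d'))) d)].
Definition bv (g : pt -> bool) (q : pt) : bool :=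
  [exists d : 'I_3, [exists s : bool, [exists t : bool,
     bf g (psub (psub q (bscale s (unitv (odir1 d))))
                       (bscale t (unitv (odir2 d)))) d]]].
Definition psiG (g : pt -> bool) (q : pt) : int :=
  (Posz (bv g q) - \sum_(d < 3) Posz (be g q d) + \sum_(d < 3) Posz (bf g q d))%R.

Lemma padd_psub (p v q : pt) : padd (psub p v) q = psub (padd p q) v.
Proof.
case: p => [[a b] e]; case: v => [[a' b'] e']; case: q => [[a'' b''] e''].
rewrite /padd /psub /=; congr (_, _, _); ring.
Qed.

Lemma padd0 q : padd pzero q = q.
Proof. case: q => [[a b] e]; rewrite /padd /=; congr (_, _, _); ring. Qed.

Definition shift (g : pt -> bool) q := fun p => g (padd p q).

Lemma bf_shift g q p d : bf (shift g q) p d = bf g (padd p q) d.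
Proof. by rewrite /bf /shift padd_psub. Qed.

Lemma be_shift g q p d : be (shift g q) p d = be g (padd p q) d.
Proof. rewrite /be; apply: eq_existsb => e; by rewrite !bf_shift padd_psub. Qed.

Lemma bv_shift g q p : bv (shift g q) p = bv g (padd p q).
Proof.
rewrite /bv; apply: eq_existsb => e; apply: eq_existsb => s; apply: eq_existsb => t.
by rewrite bf_shift !padd_psub.
Qed.

Lemma psiG_shift g q : psiG g q = psiG (shift g q) pzero.
Proof.
rewrite /psiG bv_shift padd0; congr (_ - _ + _)%R; apply: eq_bigr => d _;
  by rewrite ?be_shift ?bf_shift padd0.
Qed.


Lemma ex3 (P : 'I_3 -> bool) :
  [exists d, P d] = [|| P (@Ordinal 3 0 isT), P (@Ordinal 3 1 isT) | P (@Ordinal 3 2 isT)].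
Proof.
apply/existsP/idP => [[[[|[|[|d]]] Hd]] H|].
- by rewrite (bool_irrelevance Hd isT) in H; rewrite H.
- by rewrite (bool_irrelevance Hd isT) in H; rewrite H orbT.
- by rewrite (bool_irrelevance Hd isT) in H; rewrite H !orbT.
- by [].
by case/or3P => H; eexists; exact: H.
Qed.

Lemma exb (P : bool -> bool) : [exists s, P s] = P true || P false.
Proof. apply/existsP/orP => [[[]] H|[] H]; by [left|right|eexists; exact: H]. Qed.

Lemma sum3 (F : 'I_3 -> int) :
  (\sum_(d < 3) F d = F (@Ordinal 3 0 isT) + F (@Ordinal 3 1 isT) + F (@Ordinal 3 2 isT))%R.
Proof.
rewrite !big_ord_recr big_ord0 /= add0r.
congr (_ + _ + _)%R; congr F; exact: val_inj.
Qed.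

Definition bvd g q (d : nat) :=
  let f s t := bf g (psub (psub q (bscale s (unitv (odir1 d)))) (bscale t (unitv (odir2 d)))) d in
  (f true true || f true false) || (f false true || f false false).
Definition bed g q (d' d : nat) := (d != d') && (bf g q d || bf g (psub q (unitv (3 - d - d'))) d).
Definition beE g q d' := [|| bed g q d' 0, bed g q d' 1 | bed g q d' 2].
Definition psiE g q : int :=
  (Posz [|| bvd g q 0, bvd g q 1 | bvd g q 2] - (Posz (beE g q 0) + Posz (beE g q 1) + Posz (beE g q 2))
   + (Posz (bf g q 0) + Posz (bf g q 1) + Posz (bf g q 2)))%R.

Lemma psiG_E g q : psiG g q = psiE g q.
Proof.
rewrite /psiG /psiE !sum3 /bv /be ex3 !exb /bvd.
rewrite !ex3.
reflexivity.
Qed.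

Definition enc (s t u : bool) : pt :=
  ((if s then -1 else 0), (if t then -1 else 0), (if u then -1 else 0))%R.

Definition Psi8 (h : bool -> bool -> bool -> bool) : int :=
  psiE (fun p => h (p.1.1 == -1)%R (p.1.2 == -1)%R (p.2 == -1)%R) pzero.

Lemma psiG0 g : psiG g pzero = Psi8 (fun s t u => g (enc s t u)).
Proof. rewrite psiG_E. reflexivity. Qed.

Lemma Psi8_ext h1 h2 : (forall s t u, h1 s t u = h2 s t u) -> Psi8 h1 = Psi8 h2.
Proof.
move=> E; rewrite /Psi8 /psiE /beE /bed /bvd /bf /=.
by rewrite !E.
Qed.



Definition cfn n H (c : config) X Y Z :=
  [&& 0 < X <= n, 0 < Y <= n, 0 < Z <= H & if odd Z then c Z Y else c Z X].

Lemma encP (s : bool) x : ((if s then -1 else 0) + Posz x = Posz (x + ~~ s) - 1)%R.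
Proof. case: s => /=; rewrite ?addn0 ?addn1; lia. Qed.

Lemma cfE n H c X Y Z :
  cube_filled n H c (Posz X - 1, Posz Y - 1, Posz Z - 1)%R = cfn n H c X Y Z.
Proof.
rewrite /cube_filled /cfn.
case: X => [|X]; first by rewrite /=.
case: Y => [|Y]; first by rewrite /= ?andbF.
case: Z => [|Z]; first by rewrite /= ?andbF.
have E : forall m : nat, (Posz m.+1 - 1 = Posz m)%R by move=> m; lia.
rewrite !E /= !ltz_nat.
by [].
Qed.

Lemma psi_vertex n H c x y z :
  psiG (cube_filled n H c) (Posz x, Posz y, Posz z) =
  Psi8 (fun s t u => cfn n H c (x + ~~ s) (y + ~~ t) (z + ~~ u)).
Proof.
rewrite psiG_shift psiG0; apply: Psi8_ext => s t u.
rewrite /shift /enc /padd !encP. rewrite -cfE. by [].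
Qed.


Lemma card_set_sum (T : finType) (P : pred T) : #|[set x | P x]| = \sum_x (P x : nat).
Proof.
rewrite -sum1_card big_mkcond /=; apply: eq_bigr => x _; rewrite inE; by case: (P x).
Qed.

Lemma Posz_sum (I : finType) (F : I -> nat) : Posz (\sum_i F i) = (\sum_i Posz (F i))%R.
Proof. exact: (big_morph Posz PoszD (erefl _)). Qed.

Lemma euler_sum n H c :
  euler_char n H c = (\sum_(z < H.+1) \sum_(x < n.+1) \sum_(y < n.+1)
     psiG (cube_filled n H c) (Posz x, Posz y, Posz z))%R.
Proof.
have -> : (\sum_(z < H.+1) \sum_(x < n.+1) \sum_(y < n.+1)
     psiG (cube_filled n H c) (Posz x, Posz y, Posz z) =
     \sum_(b : box n H) psiG (cube_filled n H c) (ptOf b))%R.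
  rewrite exchange_big /=.
  rewrite (eq_bigr (fun x : 'I_n.+1 => \sum_(y < n.+1) \sum_(z < H.+1) psiG (cube_filled n H c) (Posz x, Posz y, Posz z))%R); last first.
    by move=> x _; rewrite exchange_big.
  rewrite pair_bigA /= pair_bigA /=.
  by [].
rewrite /euler_char /nVerts /nEdges /nFaces !card_set_sum !Posz_sum.
rewrite -(pair_bigA _ (fun (b : box n H) (d : 'I_3) => Posz (bedge n H c (ptOf b) d))).
rewrite -(pair_bigA _ (fun (b : box n H) (d : 'I_3) => Posz (bface n H c (ptOf b) d))).
rewrite /psiG; symmetry; rewrite big_split /= sumrB.
reflexivity.
Qed.

Section RS.
Local Open Scope ring_scope.

Definition L (F : bool -> bool -> bool -> bool -> int) (n : nat) (s w : int) (p1 pn : bool) : int :=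
  F false true false p1 + F true false pn false + (Posz n - 1) * F true true false false
  + (s - Posz pn) * (F true true true false - F true true false false)
  + (s - Posz p1) * (F true true false true - F true true false false)
  + w * (F true true true true - F true true true false - F true true false true + F true true false false).

Lemma Fsplit (F : bool -> bool -> bool -> bool -> int) a b :
  F true true a b = F true true false false + Posz a * (F true true true false - F true true false false)
   + Posz b * (F true true false true - F true true false false)
   + Posz (a && b) * (F true true true true - F true true true false - F true true false true + F true true false false).
Proof. case: a; case: b => /=; ring. Qed.

Lemma sum_D F n (P : nat -> bool) : (0 < n)%N -> P 0%N = false -> P n.+1 = false ->
  \sum_(v < n.+1) F (0 < v <= n)%N (v < n)%N (P v) (P v.+1) =
  L F n (\sum_(v < n) Posz (P v.+1)) (\sum_(v < n.-1) Posz (P v.+1 && P v.+2)) (P 1%N) (P n).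
Proof.
case: n => [//|n] _ P0 Pn.
rewrite big_ord_recl big_ord_recr /= P0 Pn ltnn.
rewrite (eq_bigr (fun i : 'I_n => F true true (P i.+1) (P i.+2))); last first.
  by move=> i _; rewrite /bump /= add1n !ltnS ltn_ord (ltnW (ltn_ord i)).
under eq_bigr do rewrite Fsplit.
rewrite !big_split /= sumr_const card_ord -!mulr_suml.
have eAB : \sum_(i < n) Posz (P i.+2) = \sum_(i < n) Posz (P i.+1) + Posz (P n.+1) - Posz (P 1%N).
  have h1 := @big_ord_recl int 0 +%R n (fun v : 'I_n.+1 => Posz (P v.+1)).
  have h2 := @big_ord_recr int 0 +%R n (fun v : 'I_n.+1 => Posz (P v.+1)).
  have h2' : Posz (P 1%N) + \sum_(i < n) Posz (P i.+2) = \sum_(i < n) Posz (P i.+1) + Posz (P n.+1)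
    := etrans (esym h1) h2.
  rewrite -h2'; ring.
rewrite eAB /L /bump /=.
rewrite [in RHS]big_ord_recr /=.
set A := \sum_(i < n) Posz (P i.+1).
set C := \sum_(i < n) Posz (P i.+1 && P i.+2).
rewrite add1n leqnn -mulr_natr natz.
have -> : Posz n.+1 = Posz n + 1 by rewrite -addn1 PoszD.
ring.
Qed.


Definition Godd (a0 a1 a2 a3 b0 b1 b2 b3 : bool) : int :=
  Psi8 (fun s t u => if u then (if s then a0 else a1) && (if t then b2 else b3)
                     else (if t then b0 else b1) && (if s then a2 else a3)).
Definition Geven (a0 a1 a2 a3 b0 b1 b2 b3 : bool) : int :=
  Psi8 (fun s t u => if u then (if t then b0 else b1) && (if s then a2 else a3)
                     else (if s then a0 else a1) && (if t then b2 else b3)).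

Ltac evalG := repeat match goal with
  | |- context [Godd ?a ?b ?c ?d ?e ?f ?g ?h] =>
      let v := eval vm_compute in (Godd a b c d e f g h) in change (Godd a b c d e f g h) with v
  | |- context [Geven ?a ?b ?c ?d ?e ?f ?g ?h] =>
      let v := eval vm_compute in (Geven a b c d e f g h) in change (Geven a b c d e f g h) with v
  end.

Definition Slice (G : bool -> bool -> bool -> bool -> bool -> bool -> bool -> bool -> int) n
  sP wP p1 pn sQ wQ q1 qn :=
  L (fun a b c d => L (G a b c d) n sQ wQ q1 qn) n sP wP p1 pn.

Lemma val_pp_odd n m p1 pn q1 qn : n = (2 * m)%N ->
  Slice Godd n (Posz m) 0 p1 pn (Posz m) 0 q1 qn = - (2 * Posz m * (Posz m - 1)).
Proof.
move=> ->; rewrite /Slice /L.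
case: p1; case: pn; case: q1; case: qn; evalG; rewrite /= PoszM; ring.
Qed.

Lemma val_pp_even n m p1 pn q1 qn : n = (2 * m)%N ->
  Slice Geven n (Posz m) 0 p1 pn (Posz m) 0 q1 qn = - (2 * Posz m * (Posz m - 1)).
Proof.
move=> ->; rewrite /Slice /L.
case: p1; case: pn; case: q1; case: qn; evalG; rewrite /= PoszM; ring.
Qed.

Lemma val_z0 n m q1 qn : n = (2 * m)%N ->
  Slice Geven n 0 0 false false (Posz m) 0 q1 qn = Posz m.
Proof.
move=> ->; rewrite /Slice /L.
case: q1; case: qn; evalG; rewrite /= PoszM; ring.
Qed.

Lemma val_pf n m q1 qn : n = (2 * m)%N ->
  Slice Godd n (Posz n) (Posz n - 1) true true (Posz m) 0 q1 qn = - (Posz m - 1).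
Proof.
move=> ->; rewrite /Slice /L.
case: q1; case: qn; evalG; rewrite /= PoszM; ring.
Qed.

Lemma val_fc n m q1 qn : n = (2 * m)%N ->
  Slice Geven n (Posz n) (Posz n - 1) true true (Posz m) (Posz m - 1) q1 qn = 0.
Proof.
move=> ->; rewrite /Slice /L.
case: q1; case: qn; evalG; rewrite /= PoszM; ring.
Qed.

Lemma val_ce n m q1 qn : n = (2 * m)%N ->
  Slice Godd n 0 0 false false (Posz m) (Posz m - 1) q1 qn = 1.
Proof.
move=> ->; rewrite /Slice /L.
case: q1; case: qn; evalG; rewrite /= PoszM; ring.
Qed.


Lemma slice_sum G n (P Q : nat -> bool) : (0 < n)%N -> P 0%N = false -> P n.+1 = false ->
  Q 0%N = false -> Q n.+1 = false ->
  \sum_(x < n.+1) \sum_(y < n.+1)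
     G (0 < x <= n)%N (x < n)%N (P x) (P x.+1) (0 < y <= n)%N (y < n)%N (Q y) (Q y.+1) =
  Slice G n (\sum_(v < n) Posz (P v.+1)) (\sum_(v < n.-1) Posz (P v.+1 && P v.+2)) (P 1%N) (P n)
            (\sum_(v < n) Posz (Q v.+1)) (\sum_(v < n.-1) Posz (Q v.+1 && Q v.+2)) (Q 1%N) (Q n).
Proof.
move=> n0 P0 Pn Q0 Qn.
under eq_bigr => x _ do rewrite (sum_D (G _ _ _ _) n0 Q0 Qn).
exact: (sum_D (fun a b c d => L (G a b c d) _ _ _ _ _) n0 P0 Pn).
Qed.

Section Bridge.
Variables (n H : nat) (c : config).
Hypothesis hr : forall i j, c i j -> (1 <= i <= H)%N /\ (1 <= j <= n)%N.

Lemma cfn_simp X Y Z :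
  cfn n H c X Y Z = if odd Z then (0 < X <= n)%N && c Z Y else (0 < Y <= n)%N && c Z X.
Proof.
rewrite /cfn; case: (odd Z).
- case E: (c Z Y); last by rewrite !andbF.
  by have [-> ->] := hr E; rewrite !andbT.
- case E: (c Z X); last by rewrite !andbF.
  by have [-> ->] := hr E; rewrite !andbT.
Qed.

Lemma slice_odd z : odd z ->
  \sum_(x < n.+1) \sum_(y < n.+1) psiG (cube_filled n H c) (Posz x, Posz y, Posz z) =
  \sum_(x < n.+1) \sum_(y < n.+1)
     Godd (0 < x <= n)%N (x < n)%N (c z.+1 x) (c z.+1 x.+1) (0 < y <= n)%N (y < n)%N (c z y) (c z y.+1).
Proof.
move=> oz; apply: eq_bigr => x _; apply: eq_bigr => y _.
rewrite psi_vertex; apply: Psi8_ext => s t u.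
rewrite cfn_simp.
case: s; case: t; case: u; rewrite /= ?addn0 ?addn1 /= ?oz //= ?ltnS.
Qed.

Lemma slice_even z : ~~ odd z ->
  \sum_(x < n.+1) \sum_(y < n.+1) psiG (cube_filled n H c) (Posz x, Posz y, Posz z) =
  \sum_(x < n.+1) \sum_(y < n.+1)
     Geven (0 < x <= n)%N (x < n)%N (c z x) (c z x.+1) (0 < y <= n)%N (y < n)%N (c z.+1 y) (c z.+1 y.+1).
Proof.
move=> oz; apply: eq_bigr => x _; apply: eq_bigr => y _.
rewrite psi_vertex; apply: Psi8_ext => s t u.
rewrite cfn_simp.

case: s; case: t; case: u; rewrite /= ?addn0 ?addn1 /= ?(negbTE oz) //= ?ltnS.
Qed.
End Bridge.


Lemma count_int N lo hi : (\sum_(v < N) ((lo <= v < hi)%N : nat) = minn hi N - lo)%N.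
Proof.
elim: N => [|N IH]; first by rewrite big_ord0 minn0.
rewrite big_ord_recr /= IH.
case: (ltnP N lo) => h1; case: (ltnP N hi) => h2 /=; lia.
Qed.

Lemma sum_false n (P : nat -> bool) : (forall j, P j = false) ->
  \sum_(v < n) Posz (P v.+1) = 0 /\ \sum_(v < n.-1) Posz (P v.+1 && P v.+2) = 0.
Proof. move=> h; split; apply: big1 => i _; by rewrite !h. Qed.

Lemma sum_pat n m (P : nat -> bool) : #|[set j : 'I_n | P j.+1]| = m ->
  (forall j, P j -> ~~ P j.+1) ->
  \sum_(v < n) Posz (P v.+1) = Posz m /\ \sum_(v < n.-1) Posz (P v.+1 && P v.+2) = 0.
Proof.
move=> hc hn; split.
- by rewrite -Posz_sum -card_set_sum hc.
- apply: big1 => i _; case E: (P i.+1) => //=; by rewrite (negbTE (hn _ E)).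
Qed.

Lemma sum_full n (P : nat -> bool) : (0 < n)%N -> (forall j, (1 <= j <= n)%N -> P j) ->
  \sum_(v < n) Posz (P v.+1) = Posz n /\ \sum_(v < n.-1) Posz (P v.+1 && P v.+2) = Posz n - 1.
Proof.
move=> n0 h; split.
- rewrite (eq_bigr (fun _ => 1)); first by rewrite sumr_const card_ord -natz.
  by move=> i _; rewrite h //= ltn_ord.
- rewrite (eq_bigr (fun _ => 1)).
    rewrite sumr_const card_ord -natz; lia.
  move=> i _; rewrite !h //=.
  + by have := ltn_ord i; lia.
  + by have := ltn_ord i; lia.
Qed.

Lemma sum_cons n m a (P : nat -> bool) : (1 <= a)%N -> (a + m <= n.+1)%N -> (0 < m)%N ->
  (forall j, P j = (a <= j < a + m)%N) ->
  \sum_(v < n) Posz (P v.+1) = Posz m /\ \sum_(v < n.-1) Posz (P v.+1 && P v.+2) = Posz m - 1.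
Proof.
move=> a1 am m0 h; split.
- rewrite -Posz_sum.
  rewrite (eq_bigr (fun v : 'I_n => ((a.-1 <= v < (a + m).-1)%N : nat))); last first.
    move=> i _; rewrite h; congr nat_of_bool.
    by apply/idP/idP => /andP [h1 h2]; apply/andP; split; lia.
  rewrite count_int; congr Posz; lia.
- rewrite -Posz_sum.
  rewrite (eq_bigr (fun v : 'I_n.-1 => ((a.-1 <= v < (a + m).-2)%N : nat))); last first.
    move=> i _; rewrite !h; congr nat_of_bool.
    by apply/idP/idP => [/andP [/andP [h1 h2] /andP [h3 h4]]|/andP [h1 h2]];
      [apply/andP; split; lia | apply/andP; split; apply/andP; split; lia].
  rewrite count_int; lia.
Qed.

End RS.

Lemma split4 (F : nat -> int) N :
  (\sum_(z < N.+4) F z = F 0%N + \sum_(i < N) F i.+1 + F N.+1 + F N.+2 + F N.+3)%R.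
Proof.
rewrite big_ord_recr big_ord_recr big_ord_recr big_ord_recl /=.
by [].
Qed.

Unset Implicit Arguments.

Theorem mainTheorem4 (n k : nat) (c : config) :
  (2 <= n)%N -> ~~ odd n -> (3 <= k)%N ->
  (* exactly the levels 1..2k-1, slots 1..n *)
  (forall i j, c i j -> (1 <= i <= k.*2 - 1)%N /\ (1 <= j <= n)%N) ->
  (* top level 2k-1: n/2 blocks in consecutive slots a, ..., a + n/2 - 1 *)
  (exists a : nat, [/\ (1 <= a)%N, (a + n./2 <= n.+1)%N &
                       forall j, c (k.*2 - 1)%N j = (a <= j < a + n./2)%N]) ->
  (* level 2k-2 is full *)
  (forall j, (1 <= j <= n)%N -> c (k.*2 - 2)%N j) ->
  (* levels 1..2k-3: n/2 blocks in pairwise non-adjacent slots *)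
  (forall i, (1 <= i <= k.*2 - 3)%N ->
     #|[set j : 'I_n | c i j.+1]| = n./2 /\ (forall j, c i j -> ~~ c i j.+1)) ->
  genus n (k.*2 - 1) c = Posz ((n * (n - 2) * (k - 2)) %/ 2)%N.
Proof.
move=> n2 nodd k3 hr [a [a1 am htop]] hfull hpat.
set m := n./2 in am htop hpat.
have nm : n = (2 * m)%N by have := odd_double_half n; rewrite (negbTE nodd) /=; lia.
have m1 : (0 < m)%N by lia.
have n0 : (0 < n)%N by lia.
set H := (k.*2 - 1)%N in hr *.
have [k' ek] : exists k', k = k'.+3 by exists (k - 3)%N; lia.
have eH : H = (2 * k' + 2).+3%N by rewrite /H ek; lia.
have c0 : forall i, c i 0%N = false.
  by move=> i; case E: (c i 0%N) => //; have [_ /andP [h _]] := hr _ _ E.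
have cn : forall i, c i n.+1 = false.
  by move=> i; case E: (c i n.+1) => //; have [_ /andP [_ h]] := hr _ _ E; lia.
have cl0 : forall j, c 0%N j = false.
  by move=> j; case E: (c 0%N j) => //; have [/andP [h _] _] := hr _ _ E.
have cltop : forall j, c (2 * k' + 6)%N j = false.
  by move=> j; case E: (c _ j) => //; have [/andP [_ h] _] := hr _ _ E; move: h; rewrite /H ek; lia.
rewrite /genus euler_sum.
pose F := fun z : nat => (\sum_(x < n.+1) \sum_(y < n.+1) psiG (cube_filled n H c) (Posz x, Posz y, Posz z))%R.
have eS : (\sum_(z < H.+1) F z = \sum_(z < (2*k'+2).+4) F z)%R by rewrite eH.
rewrite eS split4.
have hp : forall i, (1 <= i <= (2 * k' + 2).+1)%N ->
   (\sum_(v < n) Posz (c i v.+1))%R = Posz m /\ (\sum_(v < n.-1) Posz (c i v.+1 && c i v.+2))%R = 0%R.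
  move=> i hi; have [h1 h2] := hpat i ltac:(rewrite ek; lia).
  exact: sum_pat h1 h2.
have hf : (\sum_(v < n) Posz (c (2 * k' + 2).+2 v.+1))%R = Posz n /\
     (\sum_(v < n.-1) Posz (c (2 * k' + 2).+2 v.+1 && c (2 * k' + 2).+2 v.+2))%R = (Posz n - 1)%R.
  apply: sum_full => // j hj; have -> : (2 * k' + 2).+2 = (k.*2 - 2)%N by rewrite ek; lia.
  exact: hfull.
have hc : (\sum_(v < n) Posz (c (2 * k' + 2).+3 v.+1))%R = Posz m /\
     (\sum_(v < n.-1) Posz (c (2 * k' + 2).+3 v.+1 && c (2 * k' + 2).+3 v.+2))%R = (Posz m - 1)%R.
  apply: (sum_cons (a := a)) => // j; have -> : (2 * k' + 2).+3 = (k.*2 - 1)%N by rewrite ek; lia.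
  exact: htop.
have he0 := sum_false n (cl0).
have he1 : forall j, c (2 * k' + 2).+4 j = false.
  by move=> j; have -> : (2 * k' + 2).+4 = (2 * k' + 6)%N by lia.
have he := sum_false n he1.
have Fpp : forall z, (1 <= z <= 2 * k' + 2)%N -> F z = (- (2 * Posz m * (Posz m - 1)))%R.
  move=> z hz; rewrite /F.
  have [s1 w1] := hp z ltac:(lia).
  have [s2 w2] := hp z.+1 ltac:(lia).
  case: (boolP (odd z)) => oz.
  - rewrite (slice_odd hr oz) slice_sum // s1 w1 s2 w2.
    exact: val_pp_odd.
  - rewrite (slice_even hr oz) slice_sum // s1 w1 s2 w2.
    exact: val_pp_even.
have F0 : F 0%N = Posz m.
  have [s2 w2] := hp 1%N ltac:(lia).
  rewrite /F (slice_even hr (isT : ~~ odd 0)) slice_sum // he0.1 he0.2 s2 w2 !cl0.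
  exact: val_z0.
have hfe : forall j, (1 <= j <= n)%N -> c (2 * k' + 2).+2 j = true.
  move=> j hj; have -> : (2 * k' + 2).+2 = (k.*2 - 2)%N by rewrite ek; lia.
  exact: hfull.
have o1 : odd (2 * k' + 2).+1 by rewrite /= oddD oddM.
have o2 : ~~ odd (2 * k' + 2).+2 by rewrite /= oddD oddM.
have o3 : odd (2 * k' + 2).+3 by rewrite /= oddD oddM.
have F1 : F (2 * k' + 2).+1 = (- (Posz m - 1))%R.
  have [s2 w2] := hp (2 * k' + 2).+1 ltac:(lia).
  rewrite /F (slice_odd hr o1) slice_sum // hf.1 hf.2 s2 w2 !hfe //; last by lia.
  exact: val_pf.
have F2 : F (2 * k' + 2).+2 = 0%R.
  rewrite /F (slice_even hr o2) slice_sum // hf.1 hf.2 hc.1 hc.2 !hfe //; last by lia.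
  exact: val_fc.
have F3 : F (2 * k' + 2).+3 = 1%R.
  rewrite /F (slice_odd hr o3) slice_sum // he.1 he.2 hc.1 hc.2 !he1.
  exact: val_ce.
rewrite F0 F1 F2 F3.
rewrite (eq_bigr (fun _ => - (2 * Posz m * (Posz m - 1)))%R); last first.
  move=> i _; apply: Fpp; have := ltn_ord i; lia.
rewrite sumr_const card_ord.
have e1 : (n - 2 = 2 * (m - 1))%N by lia.
have e2 : (k - 2 = k'.+1)%N by lia.
have eN : (n * (n - 2) * (k - 2) = 2 * (m * (n - 2) * (k - 2)))%N by rewrite {1}nm !mulnA.
rewrite eN mulKn //.
set X := (- (2 * Posz m * (Posz m - 1)))%R.
have eL : (2 - (Posz m + X *+ (2 * k' + 2)%N - (Posz m - 1) + 0 + 1) =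
           2 * Posz (m * (n - 2) * (k - 2))%N)%R.
  rewrite -[(X *+ _)%R]mulr_natr !natz /X e1 e2 !PoszM.
  have -> : Posz (2 * k' + 2)%N = (2 * Posz k' + 2)%R by lia.
  have -> : Posz k'.+1 = (Posz k' + 1)%R by lia.
  have -> : Posz (m - 1)%N = (Posz m - 1)%R by lia.
  ring.
rewrite eL mulKz //.
Qed.
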